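(* Consider a two-player matrix game between a player $\mathrm{SV}$ (the group of surrounding vehicles) and a player $\mathrm{EV}$ (the ego vehicle). Player $\mathrm{SV}$ has exactly two actions $\pi_{\mathrm{SV}}^1$ (``Assert'') and $\pi_{\mathrm{SV}}^2$ (``Yield''); player $\mathrm{EV}$ has finitely many actions $\pi_{\mathrm{EV}}^1,\dots,\pi_{\mathrm{EV}}^{M_{\mathrm{EV}}}$. For each $i\in\{1,2\}$ and $m\in\{1,\dots,M_{\mathrm{EV}}\}$ let $J_{\mathrm{SV}}^{im}$ and $J_{\mathrm{EV}}^{im}$ be real numbers (the costs of $\mathrm{SV}$ and $\mathrm{EV}$ under the action tuple $(\pi_{\mathrm{SV}}^i,\pi_{\mathrm{EV}}^m)$). Let $b(\pi_{\mathrm{SV}}^1), b(\pi_{\mathrm{SV}}^2)\in[0,1]$ with $b(\pi_{\mathrm{SV}}^1)+b(\pi_{\mathrm{SV}}^2)=1$, and define the modified cost of $\mathrm{SV}$ by $\bar J_{\mathrm{SV}}^{im}:=(1-b(\pi_{\mathrm{SV}}^i))J_{\mathrm{SV}}^{im}$; the cost of $\mathrm{EV}$ is $J_{\mathrm{EV}}^{im}$. Assume that the inequalities $0\le J_{\mathrm{SV}}^{1m}\le J_{\mathrm{SV}}^{2m}$ and $J_{\mathrm{EV}}^{1m}\ge J_{\mathrm{EV}}^{2m}\ge 0$ hold for all $m\in\{1,\dots,M_{\mathrm{EV}}\}$ (for all feasible action tuples). If for some $p\in\{1,\dots,M_{\mathrm{EV}}\}$ the action tuple $(\pi_{\mathrm{SV}}^2,\pi_{\mathrm{EV}}^p)$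 is a pure-strategy Nash equilibrium, then it is also a Stackelberg equilibrium with $\mathrm{EV}$ as the leader (and $\mathrm{SV}$ as the follower).
   Context: An action tuple is called feasible if the corresponding simulated multi-vehicle trajectories are collision-free; it is assumed that at least one feasible action tuple exists. A pure-strategy Nash equilibrium is an action tuple from which no player can lower its own cost (modified cost $\bar J_{\mathrm{SV}}$ for $\mathrm{SV}$, $J_{\mathrm{EV}}$ for $\mathrm{EV}$) by unilaterally changing its action. A Stackelberg equilibrium with leader $\mathrm{L}$ and follower $\mathrm{F}$ is a pair $\{\pi_{\mathrm{L}}^*,\pi_{\mathrm{F}}^*(\cdot)\}$ such that $\pi_{\mathrm{F}}^*(\pi_{\mathrm{L}})\in\arg\min_{\pi_{\mathrm{F}}}J_{\mathrm{F}}(\pi_{\mathrm{L}},\pi_{\mathrm{F}})$ for every leader action $\pi_{\mathrm{L}}$ and $\pi_{\mathrm{L}}^*\in\arg\min_{\pi_{\mathrm{L}}}J_{\mathrm{L}}(\pi_{\mathrm{L}},\pi_{\mathrm{F}}^*(\pi_{\mathrm{L}}))$; here the leader is $\mathrm{EV}$ with cost $J_{\mathrm{EV}}$ and the follower is $\mathrm{SV}$ with cost $\bar J_{\mathrm{SV}}$, and the action tuple is $(\pi_{\mathrm{F}}^*(\pi_{\mathrm{L}}^* ),\pi_{\mathrm{L}}^* )$. The number $b(\pi_{\mathrm{SV}}^i)$ is the belief that the surrounding vehicles take action $\pi_{\mathrm{SV}}^i$. *)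

(* Defs.v *)
From mathcomp Require Import all_boot all_order all_algebra.
Set Implicit Arguments. Unset Strict Implicit. Unset Printing Implicit Defensive.
Import Order.TTheory GRing.Theory Num.Theory.
Local Open Scope ring_scope.

Definition Assert : 'I_2 := ord0.
Definition Yield  : 'I_2 := ord_max.

Definition modified_cost (R : pzRingType) (M : nat) (b : 'I_2 -> R)
  (JSV : 'I_2 -> 'I_M -> R) : 'I_2 -> 'I_M -> R :=
  fun i m => (1 - b i) * JSV i m.

Definition pure_Nash (R : numDomainType) (M : nat)
  (JSV' JEV : 'I_2 -> 'I_M -> R) (i : 'I_2) (m : 'I_M) : Prop :=
  (forall i', JSV' i m <= JSV' i' m) /\ (forall m', JEV i m <= JEV i m').

Definition Stackelberg_pair (R : numDomainType) (M : nat)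
  (JSV' JEV : 'I_2 -> 'I_M -> R) (piL : 'I_M) (piF : 'I_M -> 'I_2) : Prop :=
  (forall mL i', JSV' (piF mL) mL <= JSV' i' mL) /\
  (forall mL, JEV (piF piL) piL <= JEV (piF mL) mL).

Definition Stackelberg_tuple (R : numDomainType) (M : nat)
  (JSV' JEV : 'I_2 -> 'I_M -> R) (i : 'I_2) (m : 'I_M) : Prop :=
  exists piF : 'I_M -> 'I_2, Stackelberg_pair JSV' JEV m piF /\ piF m = i.

(* Main.v *)
Require Import Defs.
From mathcomp Require Import all_boot all_order all_algebra.
Import Order.TTheory GRing.Theory Num.Theory.
Local Open Scope ring_scope.

Lemma I2_cases (i : 'I_2) : i = Assert \/ i = Yield.
Proof.
case: i => [[|[|n]] H]; [left|right|]; try by apply: val_inj.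
by [].
Qed.

Theorem proposition2 (R : realFieldType) (M : nat)
  (JSV JEV : 'I_2 -> 'I_M -> R) (b : 'I_2 -> R)
  (hb0 : forall i, 0 <= b i) (hb1 : forall i, b i <= 1)
  (hbsum : b Assert + b Yield = 1)
  (hSV : forall m, 0 <= JSV Assert m /\ JSV Assert m <= JSV Yield m)
  (hEV : forall m, JEV Assert m >= JEV Yield m /\ JEV Yield m >= 0)
  (p : 'I_M)
  (hNE : pure_Nash (modified_cost b JSV) JEV Yield p) :
  Stackelberg_tuple (modified_cost b JSV) JEV Yield p.
Proof.
set C := modified_cost b JSV.
case: hNE => [hN1 hN2].
exists (fun m => if C Yield m <= C Assert m then Yield else Assert).
have hp : C Yield p <= C Assert p by apply: hN1.
split; last by rewrite /= hp.
split.
- move=> mL i'; case: ifP => H.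
  + by case: (I2_cases i') => ->.
  + have H' : C Assert mL <= C Yield mL by apply: ltW; rewrite ltNge H.
    by case: (I2_cases i') => ->.
- move=> mL; rewrite hp; case: ifP => _; first exact: hN2.
  apply: le_trans (hN2 mL) _; exact: (proj1 (hEV mL)).
Qed.
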